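(* Let $(\omega_n)_{n\ge1}$ be nonzero complex numbers with $\liminf_{n\to\infty}(\operatorname{Re}\omega_{n+1}-\operatorname{Re}\omega_n)=\gamma>0$ and $(\operatorname{Im}\omega_n)$ bounded, and let $(c_n)$ be complex numbers with $|c_n|\le M/|\omega_n|$ for all $n$, for some $M>0$. Then for every $\varepsilon\in(0,1)$ and every $T>\frac{2\pi}{\gamma\sqrt{1-\varepsilon}}$ there exists $n_0=n_0(\varepsilon)\in\mathbb{N}$, independent of $T$ and of $(C_n)$, such that for every complex sequence $(C_n)$ with $\sum|C_n|^2<\infty$, $$\int_0^\infty k(t)\Big(\Big|\sum_{n=n_0}^\infty C_ne^{i\omega_nt}+\overline{C_n}e^{-i\overline{\omega_n}t}\Big|^2-2\Big|\sum_{n=n_0}^\infty c_nC_ne^{i\omega_nt}+\overline{c_nC_n}e^{-i\overline{\omega_n}t}\Big|^2\Big)dt$$ $$\ge 2\pi T\sum_{n=n_0}^\infty\Big(\frac{1-\varepsilon}{\pi^2+4T^2(\operatorname{Im}\omega_n)^2}-\frac{4(1+\varepsilon)}{T^2\gamma^2}\Big)(1+e^{-2\operatorname{Im}\omega_nT})|C_n|^2 .$$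
   Context: For $T>0$, $k(t):=\sin(\pi t/T)$ for $t\in[0,T]$ and $k(t):=0$ otherwise. *)

(* Defs.v *)
From Stdlib Require Export Reals.
Open Scope R_scope.

Record Cx : Type := mkC { Re : R; Im : R }.

Definition C0 : Cx := mkC 0 0.
Definition Ci : Cx := mkC 0 1.
Definition Cadd (z w : Cx) : Cx := mkC (Re z + Re w) (Im z + Im w).
Definition Cmul (z w : Cx) : Cx :=
  mkC (Re z * Re w - Im z * Im w) (Re z * Im w + Im z * Re w).
Definition Copp (z : Cx) : Cx := mkC (- Re z) (- Im z).
Definition Cconj (z : Cx) : Cx := mkC (Re z) (- Im z).
Definition RtoC (r : R) : Cx := mkC r 0.
Definition Cexp (z : Cx) : Cx := mkC (exp (Re z) * cos (Im z)) (exp (Re z) * sin (Im z)).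
Definition Cmod2 (z : Cx) : R := Re z * Re z + Im z * Im z.
Definition Cmod (z : Cx) : R := sqrt (Cmod2 z).

Definition kern (T t : R) : R :=
  match Rle_dec 0 t with
  | left _ => match Rle_dec t T with
              | left _ => sin (PI * t / T)
              | right _ => 0
              end
  | right _ => 0
  end.

Definition is_liminf (u : nat -> R) (g : R) : Prop :=
  forall eps, 0 < eps ->
    (exists N, forall n, (n >= N)%nat -> g - eps < u n) /\
    (forall N, exists n, (n >= N)%nat /\ u n < g + eps).

Definition wterm (w Cn : Cx) (t : R) : Cx :=
  Cadd (Cmul Cn (Cexp (Cmul Ci (Cmul w (RtoC t)))))
       (Cmul (Cconj Cn) (Cexp (Cmul (Copp Ci) (Cmul (Cconj w) (RtoC t))))).

Fixpoint Csum (f : nat -> Cx) (n0 m : nat) : Cx :=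
  match m with
  | O => C0
  | S m' => Cadd (Csum f n0 m') (f (n0 + m')%nat)
  end.

Definition IsRInt (f : R -> R) (a b v : R) : Prop :=
  exists pr : Riemann_integrable f a b, RiemannInt pr = v.

Definition integrand (w c Cc : nat -> Cx) (T : R) (n0 m : nat) (t : R) : R :=
  kern T t *
  (Cmod2 (Csum (fun n => wterm (w n) (Cc n) t) n0 m)
   - 2 * Cmod2 (Csum (fun n => wterm (w n) (Cmul (c n) (Cc n)) t) n0 m)).

Definition rhs_coef (w : nat -> Cx) (T g eps : R) (n : nat) : R :=
  ((1 - eps) / (PI ^ 2 + 4 * T ^ 2 * (Im (w n)) ^ 2)
   - 4 * (1 + eps) / (T ^ 2 * g ^ 2))
  * (1 + exp (- 2 * Im (w n) * T)).

(* Main.v *)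
From Coquelicot Require Import Coquelicot.
Require Import Defs.
From Stdlib Require Import Reals Lra Lia Psatz ZArith.
Open Scope R_scope.

Definition d1 nu beta theta := nu*nu + beta*beta - theta*theta.
Definition d2 (beta theta : R) := -(2*beta*theta).
Definition Fa nu beta theta U1 U2 (t : R) : R := exp (-(beta*t)) *
  ((U1*cos(theta*t) - U2*sin(theta*t))*(-(beta*sin(nu*t)) - nu*cos(nu*t))
   - (U1*sin(theta*t)+U2*cos(theta*t))*(theta*sin(nu*t))).
Lemma Fa_deriv nu beta theta U1 U2 t : is_derive (Fa nu beta theta U1 U2) t
  (sin(nu*t)*exp(-(beta*t))*((U1*d1 nu beta theta - U2*d2 beta theta)*cos(theta*t)
     + (-(U1*d2 beta theta+U2*d1 nu beta theta))*sin(theta*t))).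
Proof.
  unfold Fa, d1, d2. auto_derive; [exact I|]. ring.
Qed.

Definition Jf nu beta theta p q (t : R) := sin(nu*t)*exp(-(beta*t))*(p*cos(theta*t)+q*sin(theta*t)).
Definition NN nu beta theta := d1 nu beta theta ^2 + d2 beta theta ^2.
Definition U1 nu beta theta p q := (p*d1 nu beta theta - q*d2 beta theta)/NN nu beta theta.
Definition U2 nu beta theta p q := -(p*d2 beta theta + q*d1 nu beta theta)/NN nu beta theta.
Definition Jv T nu beta theta p q :=
  nu*(U1 nu beta theta p q + exp(-(beta*T))*(U1 nu beta theta p q*cos(theta*T) - U2 nu beta theta p q*sin(theta*T))).

Lemma Jf_cont nu beta theta p q t : continuous (Jf nu beta theta p q) t.
Proof.
  apply (ex_derive_continuous (K:=R_AbsRing) (V:=R_NormedModule)). unfold Jf. auto_derive. exact I.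
Qed.

Lemma Jf_isRInt T nu beta theta p q : 0 < T -> nu*T = PI -> 0 < NN nu beta theta ->
  is_RInt (Jf nu beta theta p q) 0 T (Jv T nu beta theta p q).
Proof.
  intros hT hnu hN.
  set (u1 := U1 nu beta theta p q). set (u2 := U2 nu beta theta p q).
  assert (E1 : u1 * d1 nu beta theta - u2 * d2 beta theta = p).
  { unfold u1, u2, U1, U2. unfold NN in *. field. lra. }
  assert (E2 : -(u1 * d2 beta theta + u2 * d1 nu beta theta) = q).
  { unfold u1, u2, U1, U2. unfold NN in *. field. lra. }
  assert (H := is_RInt_derive (Fa nu beta theta u1 u2) _ 0 T
     (fun x _ => Fa_deriv nu beta theta u1 u2 x)).
  rewrite E1, E2 in H.
  assert (H2 := H (fun x _ => Jf_cont nu beta theta p q x)).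
  replace (Jv T nu beta theta p q) with (minus (Fa nu beta theta u1 u2 T) (Fa nu beta theta u1 u2 0)).
  exact H2.
  unfold minus, plus, opp; simpl. unfold Fa, Jv. fold u1 u2. rewrite hnu.
  replace (beta*0) with 0 by ring. replace (nu*0) with 0 by ring. replace (theta*0) with 0 by ring.
  rewrite Ropp_0, exp_0, sin_0, cos_0, sin_PI, cos_PI. ring.
Qed.

Lemma NN_ge nu beta theta : NN nu beta theta >= (theta*theta - nu*nu)^2.
Proof. unfold NN, d1, d2. nra. Qed.

Lemma abs_of_sq x y : 0 <= y -> x^2 <= y^2 -> Rabs x <= y.
Proof. intros Hy H. unfold Rabs; destruct (Rcase_abs x); nra. Qed.

Lemma Jv_bound T nu beta theta p q : 0 < nu -> nu*nu < theta*theta ->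
  Rabs (Jv T nu beta theta p q) <=
  nu * sqrt (p*p+q*q) * (1 + exp(-(beta*T))) / (theta*theta - nu*nu).
Proof.
  intros hnu hth.
  set (e := exp (-(beta*T))). assert (he : 0 < e) by apply exp_pos.
  set (c := cos (theta*T)). set (s := sin (theta*T)).
  assert (hcs : c*c + s*s = 1) by (unfold c, s; rewrite <- (sin2_cos2 (theta*T)); unfold Rsqr; ring).
  assert (hc1 : c <= 1) by (unfold c; apply COS_bound).
  assert (hNN := NN_ge nu beta theta).
  assert (hNp : 0 < NN nu beta theta) by nra.
  set (N := NN nu beta theta) in *.
  set (u1 := U1 nu beta theta p q). set (u2 := U2 nu beta theta p q).
  assert (HU : u1*u1+u2*u2 = (p*p+q*q)/N).
  { unfold u1, u2, U1, U2. fold N.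
    assert (HN : N = d1 nu beta theta ^2 + d2 beta theta ^2) by reflexivity.
    set (a := d1 nu beta theta) in *. set (b := d2 beta theta) in *.
    rewrite HN in *. field. lra. }
  assert (HJ : Jv T nu beta theta p q = nu*(u1*(1+e*c) - u2*(e*s))).
  { unfold Jv. fold e c s u1 u2. ring. }
  rewrite HJ. apply abs_of_sq.
  { assert (0 <= sqrt (p*p+q*q)) by apply sqrt_pos.
    assert (0 < theta*theta - nu*nu) by lra.
    apply Rmult_le_pos; [|left; apply Rinv_0_lt_compat; lra].
    apply Rmult_le_pos; [apply Rmult_le_pos|]; lra. }
  assert (hs : sqrt (p*p+q*q) ^2 = p*p+q*q).
  { rewrite <- Rsqr_pow2. apply Rsqr_sqrt. nra. }
  assert (CS : (u1*(1+e*c) - u2*(e*s))^2 <= (u1*u1+u2*u2)*((1+e)^2)).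
  { assert ((u1*(1+e*c) - u2*(e*s))^2 <= (u1*u1+u2*u2)*((1+e*c)^2+(e*s)^2)).
    { assert (Hsq := pow2_ge_0 (u1*(e*s)+u2*(1+e*c))). nra. }
    assert ((1+e*c)^2+(e*s)^2 <= (1+e)^2) by nra.
    nra. }
  rewrite HU in CS.
  set (D := theta*theta - nu*nu) in *.
  assert (hD : 0 < D) by (unfold D; lra).
  replace ((nu * sqrt (p * p + q * q) * (1 + e) / D) ^ 2) with (nu^2 * (p*p+q*q) * (1+e)^2 / D^2)
    by (set (r := sqrt (p*p+q*q)) in *; rewrite <- hs; field; lra).
  assert (hpq : 0 <= p*p+q*q) by nra.
  assert ((p*p+q*q)/N <= (p*p+q*q)/D^2).
  { unfold Rdiv. apply Rmult_le_compat_l; auto. apply Rinv_le_contravar; nra. }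
  replace ((nu * (u1 * (1 + e * c) - u2 * (e * s))) ^ 2) with (nu^2 * (u1 * (1 + e * c) - u2 * (e * s)) ^ 2) by ring.
  replace (nu ^ 2 * (p * p + q * q) * (1 + e) ^ 2 / D ^ 2) with (nu^2 * ((p * p + q * q)/D^2 * (1 + e) ^ 2)) by (field; lra).
  apply Rmult_le_compat_l; [nra|]. nra.
Qed.

Lemma Jv_diag T nu beta p q : 0 < nu*nu + beta*beta ->
  Jv T nu beta 0 p q = nu * p * (1 + exp(-(beta*T))) / (nu*nu+beta*beta).
Proof.
  intros h. unfold Jv, U1, U2, NN, d1, d2. replace (0*T) with 0 by ring.
  rewrite cos_0, sin_0. field. repeat split; nra.
Qed.
Fixpoint rsum (f : nat -> R) (p q : nat) : R :=
  match q with O => 0 | S q' => rsum f p q' + f (p + q')%nat end.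

Lemma rsum_ext f g p q : (forall i, (i < q)%nat -> f (p+i)%nat = g (p+i)%nat) -> rsum f p q = rsum g p q.
Proof. induction q; simpl; intros H; auto. rewrite IHq by (intros; apply H; lia). rewrite H by lia. auto. Qed.

Lemma rsum_plus f g p q : rsum (fun i => f i + g i) p q = rsum f p q + rsum g p q.
Proof. induction q; simpl; [ring|rewrite IHq; ring]. Qed.

Lemma rsum_scal c f p q : rsum (fun i => c * f i) p q = c * rsum f p q.
Proof. induction q; simpl; [ring|rewrite IHq; ring]. Qed.

Lemma rsum_le f g p q : (forall i, (i < q)%nat -> f (p+i)%nat <= g (p+i)%nat) -> rsum f p q <= rsum g p q.
Proof. induction q; simpl; intros H; [lra|]. assert (H1 := H q (Nat.lt_succ_diag_r q)). assert (rsum f p q <= rsum g p q) by (apply IHq; intros; apply H; lia). lra. Qed.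

Lemma rsum_nonneg f p q : (forall i, (i < q)%nat -> 0 <= f (p+i)%nat) -> 0 <= rsum f p q.
Proof. intros H. replace 0 with (rsum (fun _ => 0) p q). apply rsum_le; auto. induction q; simpl; auto. rewrite IHq; [ring|intros; apply H; lia]. Qed.

Lemma rsum_split f p k r : rsum f p (k + r) = rsum f p k + rsum f (p + k) r.
Proof. induction r; simpl. rewrite Nat.add_0_r; ring. rewrite Nat.add_succ_r. simpl. rewrite IHr. replace (p + (k + r))%nat with (p + k + r)%nat by lia. ring. Qed.

Lemma rsum_abs f p q : Rabs (rsum f p q) <= rsum (fun i => Rabs (f i)) p q.
Proof. induction q; simpl. rewrite Rabs_R0; lra. eapply Rle_trans; [apply Rabs_triang|]. lra. Qed.

Lemma rsum_swap (f : nat -> nat -> R) p q p' q' :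
  rsum (fun j => rsum (fun l => f j l) p' q') p q = rsum (fun l => rsum (fun j => f j l) p q) p' q'.
Proof.
  induction q; simpl.
  - induction q'; simpl; auto. rewrite <- IHq'. ring.
  - rewrite IHq. rewrite <- rsum_plus. auto.
Qed.

Lemma rsum_sq f p q : (rsum f p q)^2 = rsum (fun j => rsum (fun l => f j * f l) p q) p q.
Proof.
  replace ((rsum f p q)^2) with (rsum f p q * rsum f p q) by ring.
  rewrite <- (rsum_scal (rsum f p q) f). 
  replace (rsum (fun i : nat => rsum f p q * f i) p q) with (rsum (fun i : nat => f i * rsum f p q) p q)
   by (apply rsum_ext; intros; ring).
  apply rsum_ext. intros i _. rewrite <- rsum_scal. auto.
Qed.

Lemma is_RInt_rsum (f : nat -> R -> R) (v : nat -> R) a b p q :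
  (forall i, (i < q)%nat -> is_RInt (f (p+i)%nat) a b (v (p+i)%nat)) ->
  is_RInt (fun t => rsum (fun i => f i t) p q) a b (rsum v p q).
Proof.
  induction q; intros H; simpl.
  - assert (H0 := is_RInt_const (V:=R_NormedModule) a b 0). unfold scal in H0; simpl in H0; unfold mult in H0; simpl in H0. rewrite Rmult_0_r in H0. exact H0.
  - apply (is_RInt_plus (V:=R_NormedModule)). apply IHq; intros; apply H; lia. apply H; lia.
Qed.

Section Pair.
Variables (a b x y : nat -> R) (nu T : R).

Definition phi (j : nat) (t : R) := 2*exp(-(b j*t))*(x j*cos(a j*t) - y j*sin(a j*t)).
Definition PP j l := x j * x l + y j * y l.
Definition QQ j l := x j * y l - y j * x l.
Definition PP' j l := x j * x l - y j * y l.
Definition QQ' j l := -(x j * y l + y j * x l).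
Definition pv j l := 2 * Jv T nu (b j + b l) (a j - a l) (PP j l) (QQ j l)
                   + 2 * Jv T nu (b j + b l) (a j + a l) (PP' j l) (QQ' j l).

Lemma pair_pointwise j l t : sin(nu*t) * (phi j t * phi l t) =
  2 * Jf nu (b j + b l) (a j - a l) (PP j l) (QQ j l) t
  + 2 * Jf nu (b j + b l) (a j + a l) (PP' j l) (QQ' j l) t.
Proof.
  unfold phi, Jf, PP, QQ, PP', QQ'.
  replace ((a j - a l)*t) with (a j * t - a l * t) by ring.
  replace ((a j + a l)*t) with (a j * t + a l * t) by ring.
  replace (-((b j + b l)*t)) with (-(b j*t) + -(b l*t)) by ring.
  rewrite cos_minus, sin_minus, cos_plus, sin_plus, exp_plus. ring.
Qed.

Lemma NN_pos beta theta : 0 < nu -> theta*theta <> nu*nu -> 0 < NN nu beta theta.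
Proof. intros h1 h2. assert (H := NN_ge nu beta theta). assert (theta*theta - nu*nu <> 0) by lra.
  set (z := theta*theta - nu*nu) in *.
  assert (0 < z*z) by (destruct (Rtotal_order z 0) as [?|[?|?]]; nra).
  nra. Qed.

Lemma pair_isRInt j l : 0 < T -> nu*T = PI -> 0 < nu ->
  (a j - a l)*(a j - a l) <> nu*nu -> (a j + a l)*(a j + a l) <> nu*nu ->
  is_RInt (fun t => sin(nu*t) * (phi j t * phi l t)) 0 T (pv j l).
Proof.
  intros hT hnu hn h1 h2.
  apply (is_RInt_ext (V:=R_NormedModule)) with (f := fun t => 2 * Jf nu (b j + b l) (a j - a l) (PP j l) (QQ j l) t
  + 2 * Jf nu (b j + b l) (a j + a l) (PP' j l) (QQ' j l) t).
  { intros; symmetry; apply pair_pointwise. }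
  unfold pv. apply (is_RInt_plus (V:=R_NormedModule)); apply (is_RInt_scal (V:=R_NormedModule));
  apply Jf_isRInt; auto; apply NN_pos; auto.
Qed.

End Pair.

Section Core.
Variables (a b x y : nat -> R) (nu T : R).
Hypotheses (hT : 0 < T) (hnu : nu*T = PI) (hnu0 : 0 < nu).

Definition X2 j := x j * x j + y j * y j.
Definition uu j := 1 + exp (-((b j + b j)*T)).
Definition main j := 2 * nu * uu j / (nu*nu + (b j + b j)*(b j + b j)).
Definition Wf j l := (if Nat.eq_dec j l then 0 else / ((a j - a l)*(a j - a l) - nu*nu))
                    + / ((a j + a l)*(a j + a l) - nu*nu).
Definition dm j l := if Nat.eq_dec j l then main j * X2 j else 0.
Definition Fs p q t := rsum (fun j => phi a b x y j t) p q.
Definition Vq p q := rsum (fun j => rsum (fun l => pv a b x y nu T j l) p q) p q.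

Lemma rsum_delta (f : nat -> R) j p q : (p <= j < p + q)%nat ->
  rsum (fun l => if Nat.eq_dec j l then f l else 0) p q = f j.
Proof.
  induction q; intros H; [lia|]. simpl.
  destruct (Nat.eq_dec j (p+q)) as [E|E].
  - rewrite <- E. replace (rsum (fun l : nat => if Nat.eq_dec j l then f l else 0) p q) with 0. ring.
    clear IHq. assert (forall k, (k <= q)%nat -> rsum (fun l : nat => if Nat.eq_dec j l then f l else 0) p k = 0).
    { induction k; simpl; intros; auto. rewrite IHk by lia. destruct (Nat.eq_dec j (p+k)); [lia|ring]. }
    symmetry; apply H0; lia.
  - rewrite IHq by lia. ring.
Qed.

Variable n0 : nat.
Hypothesis hsep : forall j l, (n0 <= j)%nat -> (n0 <= l)%nat -> j <> l -> nu*nu < (a j - a l)*(a j - a l).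
Hypothesis hsum : forall j l, (n0 <= j)%nat -> (n0 <= l)%nat -> nu*nu < (a j + a l)*(a j + a l).

Lemma seg_isRInt p q : (n0 <= p)%nat -> is_RInt (fun t => sin(nu*t) * (Fs p q t)^2) 0 T (Vq p q).
Proof.
  intros hp.
  apply (is_RInt_ext (V:=R_NormedModule)) with
    (f := fun t => rsum (fun j => rsum (fun l => sin(nu*t) * (phi a b x y j t * phi a b x y l t)) p q) p q).
  { intros t _. unfold Fs. rewrite rsum_sq. rewrite <- rsum_scal. apply rsum_ext; intros.
    rewrite <- rsum_scal. auto. }
  apply is_RInt_rsum with (f := fun j t => rsum (fun l => sin(nu*t) * (phi a b x y j t * phi a b x y l t)) p q).
  intros i _. apply is_RInt_rsum with (f := fun l t => sin(nu*t) * (phi a b x y (p+i) t * phi a b x y l t)).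
  intros k _. apply pair_isRInt; auto.
  - destruct (Nat.eq_dec (p+i) (p+k)) as [E|E].
    + rewrite E. replace (a (p+k)%nat - a (p+k)%nat) with 0 by ring. intro; nra.
    + specialize (hsep (p+i)%nat (p+k)%nat ltac:(lia) ltac:(lia) E). intro; lra.
  - specialize (hsum (p+i)%nat (p+k)%nat ltac:(lia) ltac:(lia)). intro; lra.
Qed.

Lemma sqrt_PQ j l : sqrt (PP x y j l * PP x y j l + QQ x y j l * QQ x y j l) = sqrt (X2 j) * sqrt (X2 l).
Proof. rewrite <- sqrt_mult by (unfold X2; nra). f_equal. unfold PP, QQ, X2. ring. Qed.
Lemma sqrt_PQ' j l : sqrt (PP' x y j l * PP' x y j l + QQ' x y j l * QQ' x y j l) = sqrt (X2 j) * sqrt (X2 l).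
Proof. rewrite <- sqrt_mult by (unfold X2; nra). f_equal. unfold PP', QQ', X2. ring. Qed.

Lemma amgm j l : 2 * (sqrt (X2 j) * sqrt (X2 l)) * (1 + exp (-((b j + b l)*T))) <= uu j * X2 j + uu l * X2 l.
Proof.
  unfold uu. set (pj := exp (-(b j*T))). set (pl := exp (-(b l*T))).
  replace (exp (-((b j + b l)*T))) with (pj*pl) by (unfold pj, pl; rewrite <- exp_plus; f_equal; ring).
  replace (exp (-((b j + b j)*T))) with (pj*pj) by (unfold pj; rewrite <- exp_plus; f_equal; ring).
  replace (exp (-((b l + b l)*T))) with (pl*pl) by (unfold pl; rewrite <- exp_plus; f_equal; ring).
  assert (hj : X2 j = sqrt (X2 j) * sqrt (X2 j)) by (rewrite sqrt_sqrt; unfold X2; nra).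
  assert (hl : X2 l = sqrt (X2 l) * sqrt (X2 l)) by (rewrite sqrt_sqrt; unfold X2; nra).
  set (u := sqrt (X2 j)) in *. set (v := sqrt (X2 l)) in *. rewrite hj, hl.
  assert (H1 := pow2_ge_0 (u - v)). assert (H2 := pow2_ge_0 (pj*u - pl*v)).
  assert (E : (1 + pj * pj) * (u * u) + (1 + pl * pl) * (v * v) - 2 * (u * v) * (1 + pj * pl) = (u - v)^2 + (pj*u - pl*v)^2) by ring.
  lra.
Qed.

Lemma pv_bound j l : (n0 <= j)%nat -> (n0 <= l)%nat ->
  Rabs (pv a b x y nu T j l - dm j l) <= nu * (uu j * X2 j + uu l * X2 l) * Wf j l.
Proof.
  intros hj hl.
  assert (hA := amgm j l).
  assert (hS := hsum j l hj hl).
  assert (HS := Jv_bound T nu (b j + b l) (a j + a l) (PP' x y j l) (QQ' x y j l) hnu0 hS).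
  rewrite sqrt_PQ' in HS.
  set (e := exp (-((b j + b l)*T))) in *.
  assert (he : 0 < e) by apply exp_pos.
  set (XX := sqrt (X2 j) * sqrt (X2 l)) in *.
  assert (hXX : 0 <= XX) by (unfold XX; apply Rmult_le_pos; apply sqrt_pos).
  set (DS := (a j + a l)*(a j + a l) - nu*nu) in *.
  assert (hDS : 0 < DS) by (unfold DS; lra).
  unfold Wf, dm, pv. fold DS. destruct (Nat.eq_dec j l) as [E|E].
  - subst l. replace (a j - a j) with 0 by ring. rewrite Jv_diag by nra.
    replace (2 * (nu * PP x y j j * (1 + exp (- ((b j + b j) * T))) / (nu * nu + (b j + b j) * (b j + b j))) +
      2 * Jv T nu (b j + b j) (a j + a j) (PP' x y j j) (QQ' x y j j) - main j * X2 j)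
      with (2 * Jv T nu (b j + b j) (a j + a j) (PP' x y j j) (QQ' x y j j))
      by (unfold main, uu, PP, X2; field; nra).
    rewrite Rabs_mult, Rabs_right by lra.
    replace (nu * (uu j * X2 j + uu j * X2 j) * (0 + / DS)) with ((uu j * X2 j + uu j * X2 j) * (nu / DS)) by (field; lra).
    apply Rle_trans with (2 * (nu * XX * (1 + e) / DS)); [lra|].
    replace (2 * (nu * XX * (1 + e) / DS)) with (2 * XX * (1 + e) * (nu/DS)) by (field; lra).
    apply Rmult_le_compat_r. apply Rlt_le, Rdiv_lt_0_compat; lra. exact hA.
  - assert (hD := hsep j l hj hl E).
    assert (HD := Jv_bound T nu (b j + b l) (a j - a l) (PP x y j l) (QQ x y j l) hnu0 hD).
    rewrite sqrt_PQ in HD. fold e XX in HD.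
    set (DD := (a j - a l)*(a j - a l) - nu*nu) in *.
    assert (hDD : 0 < DD) by (unfold DD; lra).
    rewrite Rminus_0_r.
    eapply Rle_trans; [apply Rabs_triang|]. rewrite !Rabs_mult, !(Rabs_right 2) by lra.
    apply Rle_trans with (2 * XX * (1 + e) * (nu / DD + nu / DS)).
    { replace (2 * XX * (1 + e) * (nu / DD + nu / DS)) with (2 * (nu * XX * (1 + e) / DD) + 2 * (nu * XX * (1 + e) / DS)) by (field; lra). lra. }
    replace (nu * (uu j * X2 j + uu l * X2 l) * (/ DD + / DS)) with ((uu j * X2 j + uu l * X2 l) * (nu / DD + nu / DS)) by (field; lra).
    apply Rmult_le_compat_r; [|exact hA].
    assert (0 < nu/DD) by (apply Rdiv_lt_0_compat; lra). assert (0 < nu/DS) by (apply Rdiv_lt_0_compat; lra). lra.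
Qed.


Lemma Wf_sym j l : Wf j l = Wf l j.
Proof.
  unfold Wf. destruct (Nat.eq_dec j l), (Nat.eq_dec l j); try lia.
  - replace (a l + a j) with (a j + a l) by ring. auto.
  - replace (a l - a j) with (-(a j - a l)) by ring. replace (a l + a j) with (a j + a l) by ring.
    f_equal; f_equal; ring.
Qed.

Lemma uX2_nonneg j : 0 <= uu j * X2 j.
Proof. unfold uu, X2. assert (0 < exp (-((b j + b j)*T))) by apply exp_pos. nra. Qed.

Lemma core p q Wb : (n0 <= p)%nat ->
  (forall j, (p <= j < p + q)%nat -> rsum (fun l => Wf j l) p q <= Wb) ->
  Rabs (Vq p q - rsum (fun j => main j * X2 j) p q) <= 2*nu*Wb*rsum (fun j => uu j * X2 j) p q.
Proof.
  intros hp hW.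
  assert (E : Vq p q - rsum (fun j => main j * X2 j) p q =
     rsum (fun j => rsum (fun l => pv a b x y nu T j l - dm j l) p q) p q).
  { assert (E1 : Vq p q = rsum (fun j => rsum (fun l => pv a b x y nu T j l - dm j l) p q + main j * X2 j) p q).
    { unfold Vq. apply rsum_ext. intros i hi.
      rewrite (rsum_ext (fun l => pv a b x y nu T (p+i) l) (fun l => (pv a b x y nu T (p+i) l - dm (p+i) l) + dm (p+i) l))
        by (intros; ring).
      rewrite rsum_plus. unfold dm at 2. rewrite (rsum_delta (fun _ => main (p+i)%nat * X2 (p+i)%nat)) by lia. auto. }
    rewrite E1, rsum_plus. ring. }
  rewrite E. eapply Rle_trans; [apply rsum_abs|].
  apply Rle_trans with (rsum (fun j => rsum (fun l => Rabs (pv a b x y nu T j l - dm j l)) p q) p q).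
  { apply rsum_le. intros i hi. apply rsum_abs. }
  apply Rle_trans with (rsum (fun i => rsum (fun l => nu * (uu i * X2 i + uu l * X2 l) * Wf i l) p q) p q).
  { apply rsum_le. intros i hi. apply rsum_le. intros k hk. apply pv_bound; lia. }
  assert (E2 : rsum (fun i => rsum (fun l => nu * (uu i * X2 i + uu l * X2 l) * Wf i l) p q) p q =
     nu * rsum (fun i => uu i * X2 i * rsum (fun l => Wf i l) p q) p q
     + nu * rsum (fun l => uu l * X2 l * rsum (fun i => Wf l i) p q) p q).
  { assert (S1 : rsum (fun i => rsum (fun l => nu * (uu i * X2 i + uu l * X2 l) * Wf i l) p q) p q =
       rsum (fun i => rsum (fun l => nu * (uu i * X2 i) * Wf i l) p q) p q +
       rsum (fun i => rsum (fun l => nu * (uu l * X2 l) * Wf i l) p q) p q).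
    { rewrite <- rsum_plus. apply rsum_ext; intros. rewrite <- rsum_plus. apply rsum_ext; intros. ring. }
    assert (S2 : rsum (fun i => rsum (fun l => nu * (uu i * X2 i) * Wf i l) p q) p q =
       nu * rsum (fun i => uu i * X2 i * rsum (fun l => Wf i l) p q) p q).
    { rewrite <- rsum_scal. apply rsum_ext; intros. rewrite <- !rsum_scal. apply rsum_ext; intros. ring. }
    assert (S3 : rsum (fun i => rsum (fun l => nu * (uu l * X2 l) * Wf i l) p q) p q =
       nu * rsum (fun l => uu l * X2 l * rsum (fun i => Wf l i) p q) p q).
    { rewrite (rsum_swap (fun i l => nu * (uu l * X2 l) * Wf i l)).
      rewrite <- rsum_scal. apply rsum_ext; intros. rewrite <- !rsum_scal. apply rsum_ext; intros.
      rewrite Wf_sym. ring. }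
    lra. }
  rewrite E2.
  assert (B : rsum (fun i => uu i * X2 i * rsum (fun l => Wf i l) p q) p q <= Wb * rsum (fun j => uu j * X2 j) p q).
  { rewrite <- rsum_scal. apply rsum_le. intros i hi.
    rewrite (Rmult_comm Wb). apply Rmult_le_compat_l. apply uX2_nonneg. apply hW. lia. }
  apply Rmult_le_compat_l with (r := nu) in B; [|lra].
  lra.
Qed.

End Core.

Lemma rsum_tele f (F : nat -> R) p q : (forall i, (i < q)%nat -> f (p+i)%nat <= F (S i) - F i) ->
  rsum f p q <= F q - F O.
Proof. induction q; simpl; intros H; [lra|]. assert (H1 := H q (Nat.lt_succ_diag_r q)).
  assert (rsum f p q <= F q - F O) by (apply IHq; intros; apply H; lia). lra. Qed.

Lemma rsum_shift1 f p r : rsum f p (S r) = f p + rsum f (S p) r.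
Proof. induction r. simpl. rewrite Nat.add_0_r. ring. 
  change (rsum f p (S (S r))) with (rsum f p (S r) + f (p + S r)%nat). rewrite IHr. simpl.
  replace (p + S r)%nat with (S (p + r)) by lia. ring. Qed.

Section Gap.
Variables (a : nat -> R) (nu gam A : R) (n0 : nat).
Hypotheses (hgam : 0 < gam) (hnu : 0 < nu) (hnug : 2*nu <= gam) (hA : 2*gam <= A)
  (hstep : forall n, (n0 <= n)%nat -> gam <= a (S n) - a n) (ha0 : A <= a n0).

Lemma a_dist j k : (n0 <= j)%nat -> gam * INR k <= a (j + k)%nat - a j.
Proof.
  intros hj. induction k. simpl. rewrite Nat.add_0_r. lra.
  rewrite S_INR. replace (j + S k)%nat with (S (j+k)) by lia.
  assert (H := hstep (j+k)%nat ltac:(lia)). lra.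
Qed.

Lemma a_ge n : (n0 <= n)%nat -> A + gam * INR (n - n0) <= a n.
Proof. intros h. assert (H := a_dist n0 (n - n0) (le_n _)). replace (n0 + (n - n0))%nat with n in H by lia. lra. Qed.

Lemma a_sep j l : (n0 <= j)%nat -> (n0 <= l)%nat -> (j < l)%nat -> gam * INR (l - j) <= a l - a j.
Proof. intros hj hl hjl. assert (H := a_dist j (l - j) hj). replace (j + (l - j))%nat with l in H by lia. exact H. Qed.

Lemma hsep' j l : (n0 <= j)%nat -> (n0 <= l)%nat -> j <> l -> nu*nu < (a j - a l)*(a j - a l).
Proof.
  intros hj hl hjl. assert (hh : (j < l \/ l < j)%nat) by lia. destruct hh as [h|h].
  - assert (H := a_sep j l hj hl h). assert (1 <= INR (l - j)) by (apply (le_INR 1); lia).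
    assert (gam <= gam * INR (l - j)) by nra. assert (2*nu <= a l - a j) by lra.
    replace ((a j - a l)*(a j - a l)) with ((a l - a j)*(a l - a j)) by ring. nra.
  - assert (H := a_sep l j hl hj h). assert (1 <= INR (j - l)) by (apply (le_INR 1); lia).
    assert (gam <= gam * INR (j - l)) by nra. assert (2*nu <= a j - a l) by lra. nra.
Qed.

Lemma hsum' j l : (n0 <= j)%nat -> (n0 <= l)%nat -> nu*nu < (a j + a l)*(a j + a l).
Proof.
  intros hj hl. assert (H1 := a_ge j hj). assert (H2 := a_ge l hl).
  assert (0 <= gam * INR (j - n0)) by (apply Rmult_le_pos; [lra|apply pos_INR]).
  assert (0 <= gam * INR (l - n0)) by (apply Rmult_le_pos; [lra|apply pos_INR]).
  assert (2*nu <= a j + a l) by lra. nra.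
Qed.
End Gap.

Ltac nzl := repeat split; match goal with |- _ <> _ => let H := fresh in intro H; lra | _ => lra end.
Ltac nz := repeat split; match goal with |- _ <> _ => let H := fresh in intro H; nra | _ => nra end.

Lemma inv_le_frac X Y : 0 < Y -> Y <= X -> / X <= / Y.
Proof. intros. apply Rinv_le_contravar; lra. Qed.

Section Row.
Variables (a : nat -> R) (nu gam A : R) (n0 : nat).
Hypotheses (hgam : 0 < gam) (hnu : 0 < nu) (hnug : 2*nu <= gam) (hA : 2*gam <= A)
  (hstep : forall n, (n0 <= n)%nat -> gam <= a (S n) - a n) (ha0 : A <= a n0).

Lemma term_bound d k : 1 <= k -> gam * k <= d ->
  / (d*d - nu*nu) <= (2/(gam*gam)) * (/(2*k-1) - /(2*k+1)).
Proof.
  intros hk hd.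
  replace ((2/(gam*gam)) * (/(2*k-1) - /(2*k+1))) with (/ (gam*gam*(4*k*k-1)/4)) by (field; nz).
  apply inv_le_frac. apply Rdiv_lt_0_compat; [|lra]. apply Rmult_lt_0_compat; nra.
  assert (0 < gam*k) by nra.
  assert (gam*gam*k*k <= d*d) by nra. assert (4*(nu*nu) <= gam*gam) by nra. lra.
Qed.

Definition W1f j l := if Nat.eq_dec j l then 0 else / ((a j - a l)*(a j - a l) - nu*nu).
Definition W2f j l := / ((a j + a l)*(a j + a l) - nu*nu).

Lemma W2_bound p q j : (n0 <= p)%nat -> (n0 <= j)%nat ->
  rsum (fun l => W2f j l) p q <= (4/3) / (gam * (A - gam)).
Proof.
  intros hp hj.
  set (F := fun i : nat => -(4/3)/(gam*(A + gam*(INR i - 1)))).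
  apply Rle_trans with (F q - F O).
  - apply rsum_tele. intros i hi. unfold F, W2f.
    rewrite S_INR. simpl (INR 0).
    assert (Hi : 0 <= INR i) by apply pos_INR.
    assert (H1 := a_ge a gam A n0 hstep ha0 j hj).
    assert (H2 := a_ge a gam A n0 hstep ha0 (p+i) ltac:(lia)).
    assert (Hk : INR i <= INR (p + i - n0)) by (apply le_INR; lia).
    assert (0 <= gam * INR (j - n0)) by (apply Rmult_le_pos; [lra|apply pos_INR]).
    set (s0 := A + gam * INR i).
    assert (gam * INR i <= gam * INR (p + i - n0)) by (apply Rmult_le_compat_l; lra).
    assert (Hs : s0 <= a j + a (p+i)%nat) by (unfold s0; lra).
    assert (Hs0 : 2*gam <= s0) by (unfold s0; nra).
    replace (- (4 / 3) / (gam * (A + gam * (INR i + 1 - 1))) - - (4 / 3) / (gam * (A + gam * (INR i - 1))))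
      with (/ ((3/4) * ((s0 - gam) * s0))) by (unfold s0; field; nz).
    apply inv_le_frac. nra. nra.
  - unfold F. simpl (INR 0). assert (0 <= INR q) by apply pos_INR.
    assert (0 < gam * (A + gam * (INR q - 1))) by nra.
    assert (0 <= (4/3)/(gam * (A + gam * (INR q - 1)))) by (apply Rlt_le, Rdiv_lt_0_compat; lra).
    replace (A + gam * (0 - 1)) with (A - gam) by ring. unfold Rdiv in *. lra.
Qed.

Lemma W1_left p s j : (n0 <= p)%nat -> j = (p + s)%nat ->
  rsum (fun l => W1f j l) p s <= 2/(gam*gam).
Proof.
  intros hp hj.
  set (F := fun i : nat => (2/(gam*gam)) / (2*(INR s - INR i)+1)).
  apply Rle_trans with (F s - F O).
  - apply rsum_tele. intros i hi. unfold F, W1f.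
    destruct (Nat.eq_dec j (p+i)) as [E|E]; [lia|].
    rewrite S_INR.
    assert (Hd := a_sep a gam n0 hstep (p+i) j ltac:(lia) ltac:(lia) ltac:(lia)).
    replace (j - (p+i))%nat with (s - i)%nat in Hd by lia.
    rewrite minus_INR in Hd by lia.
    assert (Hk : 1 <= INR s - INR i) by (rewrite <- minus_INR by lia; apply (le_INR 1); lia).
    replace ((a j - a (p + i)%nat) * (a j - a (p + i)%nat)) with ((a j - a (p + i)%nat) * (a j - a (p + i)%nat)) by ring.
    eapply Rle_trans; [apply term_bound; [exact Hk|exact Hd]|].
    right. field. nz.
  - unfold F. simpl (INR 0). assert (0 <= INR s) by apply pos_INR.
    replace (INR s - INR s) with 0 by ring.
    assert (0 <= (2 / (gam * gam)) / (2 * (INR s - 0) + 1)).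
    { apply Rlt_le, Rdiv_lt_0_compat; [apply Rdiv_lt_0_compat; nra|lra]. }
    replace (2 * 0 + 1) with 1 by ring. unfold Rdiv at 1. rewrite Rinv_1. lra.
Qed.

Lemma W1_right r j : (n0 <= j)%nat ->
  rsum (fun l => W1f j l) (S j) r <= 2/(gam*gam).
Proof.
  intros hj.
  set (F := fun i : nat => - (2/(gam*gam)) / (2*INR i+1)).
  apply Rle_trans with (F r - F O).
  - apply rsum_tele. intros i hi. unfold F, W1f.
    destruct (Nat.eq_dec j (S j + i)) as [E|E]; [lia|].
    rewrite S_INR.
    assert (Hd := a_sep a gam n0 hstep j (S j + i) ltac:(lia) ltac:(lia) ltac:(lia)).
    replace (S j + i - j)%nat with (S i) in Hd by lia. rewrite S_INR in Hd.
    assert (Hk : 1 <= INR i + 1) by (assert (0 <= INR i) by apply pos_INR; lra).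
    replace ((a j - a (S j + i)%nat) * (a j - a (S j + i)%nat)) with ((a (S j + i)%nat - a j) * (a (S j + i)%nat - a j)) by ring.
    eapply Rle_trans; [apply term_bound; [exact Hk|exact Hd]|].
    right. assert (0 <= INR i) by apply pos_INR. field. nz.
  - unfold F. simpl (INR 0). assert (0 <= INR r) by apply pos_INR.
    assert (0 <= (2 / (gam * gam)) / (2 * INR r + 1)).
    { apply Rlt_le, Rdiv_lt_0_compat; [apply Rdiv_lt_0_compat; nra|lra]. }
    replace (2 * 0 + 1) with 1 by ring. unfold Rdiv in *. rewrite Rinv_1. lra.
Qed.

Lemma row_bound p q j : (n0 <= p)%nat -> (p <= j < p + q)%nat ->
  rsum (fun l => Wf a nu j l) p q <= 4/(gam*gam) + (4/3) / (gam * (A - gam)).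
Proof.
  intros hp hj.
  rewrite (rsum_ext _ (fun l => W1f j l + W2f j l)) by (intros; reflexivity).
  rewrite rsum_plus.
  assert (H2 := W2_bound p q j hp ltac:(lia)).
  replace q with ((j - p) + S (p + q - j - 1))%nat by lia.
  rewrite rsum_split. replace (p + (j - p))%nat with j by lia.
  rewrite rsum_shift1.
  assert (HL := W1_left p (j - p) j hp ltac:(lia)).
  assert (HR := W1_right (p + q - j - 1) j ltac:(lia)).
  assert (H0 : W1f j j = 0) by (unfold W1f; destruct (Nat.eq_dec j j); [auto|lia]).
  replace ((j - p) + S (p + q - j - 1))%nat with q in * by lia.
  change (rsum (W1f j) p (j - p)) with (rsum (fun l => W1f j l) p (j - p)).
  change (rsum (W1f j) (S j) (p + q - j - 1)) with (rsum (fun l => W1f j l) (S j) (p + q - j - 1)).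
  change (rsum (W2f j) p q) with (rsum (fun l => W2f j l) p q).
  lra.
Qed.
End Row.

Lemma nat_unbounded r : exists n : nat, r < INR n.
Proof.
  destruct (archimed r) as [H _]. exists (Z.to_nat (up r)).
  destruct (Z_lt_le_dec (up r) 0) as [h|h].
  - replace (Z.to_nat (up r)) with 0%nat by lia. simpl. apply IZR_lt in h. lra.
  - rewrite INR_IZR_INZ, Z2Nat.id by lia. lra.
Qed.

Lemma wterm_Re w C t : Re (wterm w C t) = 2*exp(-(Im w*t))*(Re C*cos(Re w*t) - Im C*sin(Re w*t)).
Proof.
  unfold wterm, Cadd, Cmul, Cexp, Cconj, Copp, Ci, RtoC; simpl.
  replace (0 * (Re w * t - Im w * 0) - 1 * (Re w * 0 + Im w * t)) with (-(Im w * t)) by ring.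
  replace (0 * (Re w * 0 + Im w * t) + 1 * (Re w * t - Im w * 0)) with (Re w * t) by ring.
  replace (- 0 * (Re w * t - - Im w * 0) - - (1) * (Re w * 0 + - Im w * t)) with (-(Im w * t)) by ring.
  replace (- 0 * (Re w * 0 + - Im w * t) + - (1) * (Re w * t - - Im w * 0)) with (-(Re w * t)) by ring.
  rewrite cos_neg, sin_neg. ring.
Qed.

Lemma wterm_Im w C t : Im (wterm w C t) = 0.
Proof.
  unfold wterm, Cadd, Cmul, Cexp, Cconj, Copp, Ci, RtoC; simpl.
  replace (0 * (Re w * t - Im w * 0) - 1 * (Re w * 0 + Im w * t)) with (-(Im w * t)) by ring.
  replace (0 * (Re w * 0 + Im w * t) + 1 * (Re w * t - Im w * 0)) with (Re w * t) by ring.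
  replace (- 0 * (Re w * t - - Im w * 0) - - (1) * (Re w * 0 + - Im w * t)) with (-(Im w * t)) by ring.
  replace (- 0 * (Re w * 0 + - Im w * t) + - (1) * (Re w * t - - Im w * 0)) with (-(Re w * t)) by ring.
  rewrite cos_neg, sin_neg. ring.
Qed.

Lemma Csum_Re f n0 m : Re (Csum f n0 m) = rsum (fun n => Re (f n)) n0 m.
Proof. induction m; simpl; auto. rewrite IHm. auto. Qed.
Lemma Csum_Im f n0 m : Im (Csum f n0 m) = rsum (fun n => Im (f n)) n0 m.
Proof. induction m; simpl; auto. rewrite IHm. auto. Qed.

Lemma Cmod2_wsum (w C : nat -> Cx) n0 m t :
  Cmod2 (Csum (fun n => wterm (w n) (C n) t) n0 m) =
  (Fs (fun n => Re (w n)) (fun n => Im (w n)) (fun n => Re (C n)) (fun n => Im (C n)) n0 m t)^2.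
Proof.
  unfold Cmod2. rewrite Csum_Re, Csum_Im.
  rewrite (rsum_ext (fun n => Im (wterm (w n) (C n) t)) (fun _ => 0)) by (intros; apply wterm_Im).
  assert (rsum (fun _ => 0) n0 m = 0) by (induction m; simpl; [auto|rewrite IHm; ring]).
  rewrite H. unfold Fs. rewrite (rsum_ext _ (fun j => phi (fun n => Re (w n)) (fun n => Im (w n)) (fun n => Re (C n)) (fun n => Im (C n)) j t)).
  ring. intros. rewrite wterm_Re. unfold phi. auto.
Qed.

Lemma integrand_isRInt (w c Cc : nat -> Cx) T n0 m n1 :
  0 < T ->
  (forall j l, (n1 <= j)%nat -> (n1 <= l)%nat -> j <> l ->
     (PI/T)*(PI/T) < (Re (w j) - Re (w l))*(Re (w j) - Re (w l))) ->
  (forall j l, (n1 <= j)%nat -> (n1 <= l)%nat ->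
     (PI/T)*(PI/T) < (Re (w j) + Re (w l))*(Re (w j) + Re (w l))) ->
  (n1 <= n0)%nat ->
  is_RInt (integrand w c Cc T n0 m) 0 T
    (Vq (fun n => Re (w n)) (fun n => Im (w n)) (fun n => Re (Cc n)) (fun n => Im (Cc n)) (PI/T) T n0 m
     - 2 * Vq (fun n => Re (w n)) (fun n => Im (w n)) (fun n => Re (Cmul (c n) (Cc n))) (fun n => Im (Cmul (c n) (Cc n))) (PI/T) T n0 m).
Proof.
  intros hT hs hS hn.
  assert (hnu : PI / T * T = PI) by (field; lra).
  assert (hnu0 : 0 < PI / T) by (apply Rdiv_lt_0_compat; [apply PI_RGT_0|lra]).
  assert (H1 := seg_isRInt (fun n => Re (w n)) (fun n => Im (w n)) (fun n => Re (Cc n)) (fun n => Im (Cc n)) (PI/T) T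
     hT hnu hnu0 n1 hs hS n0 m hn).
  assert (H2 := seg_isRInt (fun n => Re (w n)) (fun n => Im (w n)) (fun n => Re (Cmul (c n) (Cc n))) (fun n => Im (Cmul (c n) (Cc n))) (PI/T) T
     hT hnu hnu0 n1 hs hS n0 m hn).
  apply (is_RInt_scal (V:=R_NormedModule)) with (k := 2) in H2.
  assert (H := is_RInt_minus (V:=R_NormedModule) _ _ _ _ _ _ H1 H2).
  apply (is_RInt_ext (V:=R_NormedModule)) with (g := integrand w c Cc T n0 m) in H.
  exact H.
  intros t ht. rewrite Rmin_left, Rmax_right in ht by lra.
  unfold integrand, kern. destruct (Rle_dec 0 t); [|lra]. destruct (Rle_dec t T); [|lra].
  rewrite !Cmod2_wsum. replace (PI * t / T) with (PI / T * t) by (field; lra).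
  unfold minus, plus, opp, scal; simpl. unfold mult; simpl. ring.
Qed.

Lemma IsRInt_of f a b v : is_RInt f a b v -> IsRInt f a b v.
Proof.
  intros H. assert (E : ex_RInt f a b) by (exists v; exact H).
  exists (ex_RInt_Reals_0 f a b E). rewrite <- RInt_Reals. apply is_RInt_unique. exact H.
Qed.

Lemma is_RInt_nonneg h T v : 0 < T -> is_RInt h 0 T v -> (forall t, 0 < t < T -> 0 <= h t) -> 0 <= v.
Proof.
  intros hT H Hp. rewrite <- (is_RInt_unique h 0 T v H). apply RInt_ge_0; [lra| exists v; exact H |exact Hp].
Qed.

Lemma cross_bound (s f g : R -> R) T Vf Vg Vfg lam : 0 < T -> 0 < lam ->
  (forall t, 0 < t < T -> 0 <= s t) ->
  is_RInt (fun t => s t * (f t)^2) 0 T Vf -> is_RInt (fun t => s t * (g t)^2) 0 T Vg ->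
  is_RInt (fun t => s t * (f t + g t)^2) 0 T Vfg ->
  Rabs (Vfg - Vf - Vg) <= lam*Vf + Vg/lam.
Proof.
  intros hT hl hs Hf Hg Hfg.
  assert (K : forall sg, sg*sg = 1 -> 0 <= lam*Vf + Vg/lam + sg*(Vfg - Vf - Vg)).
  { intros sg hsg.
    assert (H := is_RInt_plus (V:=R_NormedModule) _ _ _ _ _ _
      (is_RInt_plus (V:=R_NormedModule) _ _ _ _ _ _ (is_RInt_scal (V:=R_NormedModule) _ _ _ lam _ Hf)
                    (is_RInt_scal (V:=R_NormedModule) _ _ _ (/lam) _ Hg))
      (is_RInt_scal (V:=R_NormedModule) _ _ _ sg _
         (is_RInt_minus (V:=R_NormedModule) _ _ _ _ _ _ (is_RInt_minus (V:=R_NormedModule) _ _ _ _ _ _ Hfg Hf) Hg))).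
    apply is_RInt_nonneg in H; auto.
    - revert H. unfold minus, plus, opp, scal; simpl. unfold mult; simpl. intros H. unfold Rdiv. lra.
    - intros t ht. unfold minus, plus, opp, scal; simpl. unfold mult; simpl.
      specialize (hs t ht). set (st := s t) in *. set (ft := f t). set (gt := g t).
      assert (E : lam * (st * ft ^ 2) + / lam * (st * gt ^ 2) + sg * (st * (ft + gt) ^ 2 + - (st * ft ^ 2) + - (st * gt ^ 2))
        = st * ((lam * ft + sg * gt)^2 / lam)).
      { transitivity (st * (lam*ft^2 + 2*sg*ft*gt + (sg*sg)*gt^2/lam)).
        rewrite hsg. field. lra. field. lra. }
      simpl in E. rewrite E. apply Rmult_le_pos; auto. apply Rmult_le_pos; [apply pow2_ge_0|left; apply Rinv_0_lt_compat; lra]. }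
  assert (K1 := K 1 ltac:(ring)). assert (K2 := K (-1) ltac:(ring)).
  unfold Rabs; destruct (Rcase_abs (Vfg - Vf - Vg)); lra.
Qed.

Section Final.
Variables (a b : nat -> R) (nu T gam A B : R) (n0 : nat).
Hypotheses (hT : 0 < T) (hnu : nu*T = PI) (hnu0 : 0 < nu) (hgam : 0 < gam) (hnug : 2*nu <= gam)
  (hA : 2*gam <= A) (hstep : forall n, (n0 <= n)%nat -> gam <= a (S n) - a n) (ha0 : A <= a n0)
  (hB : forall n, (n0 <= n)%nat -> Rabs (b n) <= B).

Definition Wb := 4/(gam*gam) + (4/3)/(gam*(A-gam)).
Definition UB := 1 + exp (2*B*T).
Definition KV := (2/nu + 2*nu*Wb)*UB.

Lemma hsepF j l : (n0 <= j)%nat -> (n0 <= l)%nat -> j <> l -> nu*nu < (a j - a l)*(a j - a l).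
Proof. apply (hsep' a nu gam n0 hgam hnu0 hnug hstep). Qed.
Lemma hsumF j l : (n0 <= j)%nat -> (n0 <= l)%nat -> nu*nu < (a j + a l)*(a j + a l).
Proof. apply (hsum' a nu gam A n0 hgam hnu0 hnug hA hstep ha0). Qed.

Lemma core' x y p q : (n0 <= p)%nat ->
  Rabs (Vq a b x y nu T p q - rsum (fun j => main b nu T j * X2 x y j) p q)
   <= 2*nu*Wb*rsum (fun j => uu b T j * X2 x y j) p q.
Proof.
  intros hp. apply (core a b x y nu T hnu0 n0 hsepF hsumF p q Wb hp).
  intros j hj. apply (row_bound a nu gam A n0 hgam hnu0 hnug hA hstep ha0); auto.
Qed.

Lemma Wb_pos : 0 < Wb.
Proof. unfold Wb. assert (0 < 4/(gam*gam)) by (apply Rdiv_lt_0_compat; nra).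
  assert (0 < 4/3/(gam*(A-gam))) by (apply Rdiv_lt_0_compat; nra). lra. Qed.

Lemma uu_pos j : 0 < uu b T j.
Proof. unfold uu. assert (0 < exp (-((b j + b j)*T))) by apply exp_pos. lra. Qed.

Lemma uu_le j : (n0 <= j)%nat -> uu b T j <= UB.
Proof.
  intros hj. unfold uu, UB. assert (H := hB j hj). apply Rplus_le_compat_l.
  destruct (Rle_lt_or_eq_dec (-((b j + b j)*T)) (2*B*T)) as [h|h].
  - apply Rabs_le_between in H. nra.
  - left; apply exp_increasing; auto.
  - rewrite h; lra.
Qed.

Lemma main_le j : main b nu T j <= 2 * uu b T j / nu.
Proof.
  unfold main. assert (H := uu_pos j).
  replace (2 * uu b T j / nu) with (2 * nu * uu b T j / (nu*nu)) by (field; lra).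
  unfold Rdiv. apply Rmult_le_compat_l; [nra|]. apply Rinv_le_contravar; nra.
Qed.

Lemma X2_nonneg x y j : 0 <= X2 x y j.
Proof. unfold X2. nra. Qed.

Lemma Vq_upper x y p q : (n0 <= p)%nat -> Vq a b x y nu T p q <= KV * rsum (X2 x y) p q.
Proof.
  intros hp. assert (H := core' x y p q hp). apply Rabs_le_between in H.
  assert (H1 : rsum (fun j => main b nu T j * X2 x y j) p q <= rsum (fun j => 2/nu*UB * X2 x y j) p q).
  { apply rsum_le. intros i hi. apply Rmult_le_compat_r. apply X2_nonneg.
    eapply Rle_trans; [apply main_le|]. assert (uu b T (p+i) <= UB) by (apply uu_le; lia).
    replace (2/nu*UB) with (2*UB/nu) by (field; lra).
    unfold Rdiv. apply Rmult_le_compat_r; [left; apply Rinv_0_lt_compat; lra| lra]. }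
  assert (H2 : rsum (fun j => uu b T j * X2 x y j) p q <= rsum (fun j => UB * X2 x y j) p q).
  { apply rsum_le. intros i hi. apply Rmult_le_compat_r. apply X2_nonneg. apply uu_le; lia. }
  rewrite rsum_scal in H1, H2.
  assert (hW := Wb_pos).
  apply Rmult_le_compat_l with (r := 2*nu*Wb) in H2; [|nra].
  unfold KV. replace ((2 / nu + 2 * nu * Wb) * UB * rsum (X2 x y) p q) with
    (2 / nu * UB * rsum (X2 x y) p q + 2 * nu * Wb * (UB * rsum (X2 x y) p q)) by ring.
  lra.
Qed.

Lemma sin_nonneg t : 0 < t < T -> 0 <= sin (nu*t).
Proof. intros h. apply sin_ge_0. nra. rewrite <- hnu. nra. Qed.

Lemma Vq_nonneg x y p q : (n0 <= p)%nat -> 0 <= Vq a b x y nu T p q.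
Proof.
  intros hp. apply (is_RInt_nonneg _ T _ hT (seg_isRInt a b x y nu T hT hnu hnu0 n0 hsepF hsumF p q hp)).
  intros t ht. apply Rmult_le_pos. apply sin_nonneg; auto. apply pow2_ge_0.
Qed.

Lemma KV_pos : 0 < KV.
Proof. unfold KV, UB. assert (0 < exp (2*B*T)) by apply exp_pos. assert (hW := Wb_pos).
  assert (0 < 2/nu) by (apply Rdiv_lt_0_compat; lra). apply Rmult_lt_0_compat; nra. Qed.

Lemma Vq_split_isRInt x y m r :
  is_RInt (fun t => sin(nu*t) * (Fs a b x y n0 m t + Fs a b x y (n0+m) r t)^2) 0 T (Vq a b x y nu T n0 (m+r)).
Proof.
  apply (is_RInt_ext (V:=R_NormedModule)) with (f := fun t => sin(nu*t) * (Fs a b x y n0 (m+r) t)^2).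
  { intros t _. unfold Fs. rewrite rsum_split. auto. }
  apply (seg_isRInt a b x y nu T hT hnu hnu0 n0 hsepF hsumF); lia.
Qed.

Lemma Vq_step x y Lt e N n r : 0 < e -> 0 <= Lt -> (forall q, rsum (X2 x y) n0 q <= Lt) ->
  (forall p q, (N <= p)%nat -> rsum (X2 x y) p q <= e/(4*(2 + /(e/(4*(KV*Lt + 1))))*(KV+1))) ->
  (N <= n)%nat ->
  Rabs (Vq a b x y nu T n0 (n+r) - Vq a b x y nu T n0 n) < e.
Proof.
  intros he hLt HL Ht hn.
  assert (hK := KV_pos).
  set (lam := e/(4*(KV*Lt + 1))).
  assert (hlam : 0 < lam) by (unfold lam; apply Rdiv_lt_0_compat; nra).
  set (e' := e/(4*(2 + /lam)*(KV+1))) in *.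
  assert (he' : 0 < e') by (unfold e'; assert (0 < /lam) by (apply Rinv_0_lt_compat; lra); apply Rdiv_lt_0_compat; nra).
  assert (CB := cross_bound (fun t => sin(nu*t)) (Fs a b x y n0 n) (Fs a b x y (n0+n) r) T
     (Vq a b x y nu T n0 n) (Vq a b x y nu T (n0+n) r) (Vq a b x y nu T n0 (n+r)) lam hT hlam sin_nonneg
     (seg_isRInt a b x y nu T hT hnu hnu0 n0 hsepF hsumF n0 n (le_n _))
     (seg_isRInt a b x y nu T hT hnu hnu0 n0 hsepF hsumF (n0+n) r ltac:(lia))
     (Vq_split_isRInt x y n r)).
  set (Vf := Vq a b x y nu T n0 n) in *. set (Vg := Vq a b x y nu T (n0+n) r) in *.
  set (Vfg := Vq a b x y nu T n0 (n+r)) in *.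
  assert (hVf : Vf <= KV * Lt).
  { eapply Rle_trans. apply Vq_upper; lia. apply Rmult_le_compat_l; [lra|apply HL]. }
  assert (hVf0 : 0 <= Vf) by (apply Vq_nonneg; lia).
  assert (hVg : Vg <= KV * e').
  { eapply Rle_trans. apply Vq_upper; lia. apply Rmult_le_compat_l; [lra|apply Ht; lia]. }
  assert (hVg0 : 0 <= Vg) by (apply Vq_nonneg; lia).
  assert (X1 : lam * Vf <= e/4).
  { apply Rle_trans with (lam * (KV*Lt)). apply Rmult_le_compat_l; lra.
    unfold lam. replace (e / (4 * (KV * Lt + 1)) * (KV * Lt)) with (e/4 * (KV*Lt/(KV*Lt+1))) by (field; nra).
    rewrite <- (Rmult_1_r (e/4)) at 2. apply Rmult_le_compat_l; [lra|].
    apply (Rmult_le_reg_r (KV*Lt+1)); [nra|]. unfold Rdiv. rewrite Rmult_assoc, Rinv_l by nra. nra. }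
  assert (X2' : Vg/lam + Vg <= e/4).
  { assert (hil : 0 < /lam) by (apply Rinv_0_lt_compat; lra).
    apply Rle_trans with ((/lam + 1) * (KV * e')).
    { replace (Vg/lam + Vg) with ((/lam+1)*Vg) by (field; lra). apply Rmult_le_compat_l; lra. }
    unfold e'. replace ((/ lam + 1) * (KV * (e / (4 * (2 + / lam) * (KV + 1)))))
      with (e/4 * (((/lam + 1)/(2 + /lam)) * (KV/(KV+1)))) by (field; nra).
    rewrite <- (Rmult_1_r (e/4)) at 2. apply Rmult_le_compat_l; [lra|].
    assert (Y1 : (/lam + 1)/(2 + /lam) <= 1).
    { apply (Rmult_le_reg_r (2 + /lam)); [lra|]. unfold Rdiv. rewrite Rmult_assoc, Rinv_l by lra. lra. }
    assert (Y2 : KV/(KV+1) <= 1).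
    { apply (Rmult_le_reg_r (KV+1)); [lra|]. unfold Rdiv. rewrite Rmult_assoc, Rinv_l by lra. lra. }
    assert (0 <= (/lam + 1)/(2 + /lam)) by (apply Rlt_le, Rdiv_lt_0_compat; lra).
    assert (0 <= KV/(KV+1)) by (apply Rlt_le, Rdiv_lt_0_compat; lra).
    nra. }
  apply Rabs_le_between in CB.
  apply Rabs_def1; lra.
Qed.

Lemma Vq_cauchy x y Lt : (forall q, rsum (X2 x y) n0 q <= Lt) ->
  (forall e, 0 < e -> exists N, forall p q, (N <= p)%nat -> rsum (X2 x y) p q <= e) ->
  Cauchy_crit (fun m => Vq a b x y nu T n0 m).
Proof.
  intros HL Ht e he.
  assert (hLt : 0 <= Lt) by (apply Rle_trans with (rsum (X2 x y) n0 0); [simpl; lra|apply HL]).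
  assert (hK := KV_pos).
  assert (hlam : 0 < e/(4*(KV*Lt + 1))) by (apply Rdiv_lt_0_compat; nra).
  assert (hil : 0 < /(e/(4*(KV*Lt + 1)))) by (apply Rinv_0_lt_compat; lra).
  destruct (Ht (e/(4*(2 + /(e/(4*(KV*Lt + 1))))*(KV+1)))) as [N hN].
  { apply Rdiv_lt_0_compat; nra. }
  exists N. intros n m hn hm. unfold R_dist.
  destruct (le_lt_dec n m) as [h|h].
  - replace m with (n + (m - n))%nat by lia. rewrite Rabs_minus_sym.
    apply (Vq_step x y Lt e N n (m-n)); auto.
  - replace n with (m + (n - m))%nat by lia.
    apply (Vq_step x y Lt e N m (n-m)); auto; lia.
Qed.

Lemma lower_m x y x' y' mu (coef : nat -> R) m : 0 <= mu ->
  (forall j, (n0 <= j)%nat -> X2 x' y' j <= mu * X2 x y j) ->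
  (forall j, (n0 <= j)%nat -> coef j <= main b nu T j - 2*nu*Wb*uu b T j - 2*mu*(main b nu T j + 2*nu*Wb*uu b T j)) ->
  rsum (fun j => coef j * X2 x y j) n0 m <= Vq a b x y nu T n0 m - 2 * Vq a b x' y' nu T n0 m.
Proof.
  intros hmu hX hc.
  assert (H1 := core' x y n0 m (le_n _)). assert (H2 := core' x' y' n0 m (le_n _)).
  apply Rabs_le_between in H1. apply Rabs_le_between in H2.
  assert (hW := Wb_pos).
  apply Rle_trans with (rsum (fun j => main b nu T j * X2 x y j) n0 m - 2*nu*Wb*rsum (fun j => uu b T j * X2 x y j) n0 m
     - 2 * (rsum (fun j => main b nu T j * X2 x' y' j) n0 m + 2*nu*Wb*rsum (fun j => uu b T j * X2 x' y' j) n0 m)); [|lra].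
  match goal with |- _ <= ?R => replace R with (rsum (fun j => main b nu T j * X2 x y j - 2*nu*Wb*(uu b T j * X2 x y j)
     - 2 * (main b nu T j * X2 x' y' j + 2*nu*Wb*(uu b T j * X2 x' y' j))) n0 m) end.
  2:{ clear. induction m; simpl; [ring|rewrite IHm; ring]. }
  apply rsum_le. intros i hi.
  assert (hj : (n0 <= n0 + i)%nat) by lia.
  specialize (hc _ hj). specialize (hX _ hj).
  assert (hm0 : 0 <= main b nu T (n0+i)). { unfold main. assert (H := uu_pos (n0+i)). apply Rlt_le, Rdiv_lt_0_compat; nra. }
  assert (hu := uu_pos (n0+i)).
  assert (hz := X2_nonneg x y (n0+i)). assert (hz' := X2_nonneg x' y' (n0+i)).
  set (mn := main b nu T (n0+i)) in *. set (u := uu b T (n0+i)) in *.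
  set (Z := X2 x y (n0+i)) in *. set (Z' := X2 x' y' (n0+i)) in *.
  assert (0 <= 2*nu*Wb*u) by (repeat apply Rmult_le_pos; lra). assert (hq : 0 <= mn + 2*nu*Wb*u) by lra.
  assert ((mn + 2*nu*Wb*u)*Z' <= (mn + 2*nu*Wb*u)*(mu*Z)) by (apply Rmult_le_compat_l; lra).
  assert (coef (n0+i)%nat * Z <= (mn - 2 * nu * Wb * u - 2 * mu * (mn + 2 * nu * Wb * u)) * Z) by (apply Rmult_le_compat_r; lra).
  nra.
Qed.
End Final.

Lemma term_alg main uu nu Wb eps g K0 de mu :
  0 < nu -> 0 < uu -> 0 < eps -> 0 < g -> 0 < K0 -> 0 <= Wb ->
  2*nu*uu/K0 <= main ->
  Wb <= 4*(1+eps)/(g*g) + de -> 4*(1+eps)/(g*g) <= 8/(g*g) ->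
  de <= eps/(4*K0) -> de <= 1 -> 0 <= mu -> mu <= eps/4 -> mu <= eps/(16*K0*(8/(g*g)+1)) ->
  (1-eps)*main - 2*nu*(4*(1+eps)/(g*g))*uu <= main - 2*nu*Wb*uu - 2*mu*(main + 2*nu*Wb*uu).
Proof.
  intros hnu huu he hg hK hW hm hWb hc hde1 hde2 hmu0 hmu1 hmu2.
  set (c := 4*(1+eps)/(g*g)) in *. set (P := nu*uu/K0).
  assert (hP : 0 <= P) by (unfold P; apply Rlt_le, Rdiv_lt_0_compat; nra).
  assert (hmP : 2*P <= main) by (unfold P; replace (2*(nu*uu/K0)) with (2*nu*uu/K0) by (field; lra); lra).
  assert (A1 : 2*nu*(Wb - c)*uu <= eps/2 * P).
  { apply Rle_trans with (2*nu*de*uu). assert (Wb - c <= de) by lra.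
    assert (0 < 2*nu*uu) by nra. nra.
    unfold P. replace (eps/2*(nu*uu/K0)) with (2*nu*(eps/(4*K0))*uu) by (field; lra).
    assert (0 < 2*nu*uu) by nra. nra. }
  assert (A2 : 4*mu*nu*Wb*uu <= eps/4 * P).
  { assert (hW8 : Wb <= 8/(g*g) + 1) by lra.
    assert (0 <= 8/(g*g)) by (apply Rlt_le, Rdiv_lt_0_compat; nra).
    apply Rle_trans with (4*nu*uu*(mu*(8/(g*g)+1))).
    { assert (0 <= 4*nu*uu*mu) by (apply Rmult_le_pos; [|lra]; apply Rmult_le_pos; lra).
      replace (4*mu*nu*Wb*uu) with ((4*nu*uu*mu)*Wb) by ring.
      replace (4*nu*uu*(mu*(8/(g*g)+1))) with ((4*nu*uu*mu)*(8/(g*g)+1)) by ring.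
      apply Rmult_le_compat_l; lra. }
    apply Rle_trans with (4*nu*uu*(eps/(16*K0*(8/(g*g)+1))*(8/(g*g)+1))).
    { assert (0 < 4*nu*uu) by nra. apply Rmult_le_compat_l; [lra|]. apply Rmult_le_compat_r; lra. }
    unfold P. right. field. repeat split; intro; nra. }
  assert (A3 : 2*mu*main <= eps/2*main) by nra.
  nra.
Qed.

Lemma Un_cv_scal c u l : Un_cv u l -> Un_cv (fun n => c * u n) (c * l).
Proof.
  intros H e he. destruct (Req_dec c 0) as [h|h].
  - exists O. intros. unfold R_dist. subst c. replace (0 * u n - 0 * l) with 0 by ring. rewrite Rabs_R0. lra.
  - assert (hc : 0 < Rabs c) by (apply Rabs_pos_lt; auto).
    destruct (H (e / Rabs c)) as [N hN]. apply Rdiv_lt_0_compat; lra.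
    exists N. intros n hn. specialize (hN n hn). unfold R_dist in *.
    replace (c * u n - c * l) with (c * (u n - l)) by ring. rewrite Rabs_mult.
    apply (Rmult_lt_compat_l (Rabs c)) in hN; auto. replace (Rabs c * (e / Rabs c)) with e in hN by (field; lra). lra.
Qed.

Lemma Un_cv_lin u w l1 l2 : Un_cv u l1 -> Un_cv w l2 -> Un_cv (fun n => u n - 2 * w n) (l1 - 2 * l2).
Proof. intros H1 H2. apply CV_minus; auto. apply Un_cv_scal; auto. Qed.

Lemma Un_cv_shift v L : Un_cv v L -> Un_cv (fun n => v (S n)) L.
Proof. intros H e he. destruct (H e he) as [N hN]. exists N. intros. apply hN. lia. Qed.

Lemma sum_f_rsum (z : nat -> R) n : sum_f_R0 (fun k => z (S k)) n = rsum z 1 (S n).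
Proof. induction n; simpl. ring. simpl in IHn. rewrite IHn. ring. Qed.

Lemma sum_f_rsum' (h : nat -> R) n0 n : sum_f_R0 (fun j => h (n0 + j)%nat) n = rsum h n0 (S n).
Proof. induction n; simpl. rewrite Nat.add_0_r; ring. simpl in IHn. rewrite IHn. ring. Qed.

Section Summ.
Variables (z : nat -> R) (l : R).
Hypotheses (hz : forall n, 0 <= z n) (hl : infinite_sum (fun n => z (S n)) l).

Lemma summ_le1 k : rsum z 1 k <= l.
Proof.
  assert (G : Un_growing (sum_f_R0 (fun n => z (S n)))).
  { intros n. simpl. assert (H := hz (S (S n))). lra. }
  assert (H := growing_ineq _ _ G hl).
  destruct k. simpl. specialize (H O). simpl in H. assert (h1 := hz 1%nat). lra.
  rewrite <- sum_f_rsum. apply H.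
Qed.

Lemma summ_bound p q : (1 <= p)%nat -> rsum z p q <= l.
Proof.
  intros hp. assert (H := summ_le1 ((p-1) + q)). rewrite rsum_split in H.
  replace (1 + (p-1))%nat with p in H by lia.
  assert (0 <= rsum z 1 (p-1)) by (apply rsum_nonneg; auto). lra.
Qed.

Lemma summ_tail e : 0 < e -> exists N, forall p q, (N <= p)%nat -> rsum z p q <= e.
Proof.
  intros he. assert (C := CV_Cauchy _ (exist _ l hl)).
  destruct (C e he) as [N hN]. exists (N+2)%nat. intros p q hp.
  destruct q. simpl. lra.
  assert (H := summ_le1 ((p-1) + S q)). clear H.
  assert (E : rsum z p (S q) = sum_f_R0 (fun n => z (S n)) (p - 2 + S q) - sum_f_R0 (fun n => z (S n)) (p - 2)).
  { rewrite !sum_f_rsum. replace (S (p - 2 + S q)) with ((p - 1) + S q)%nat by lia.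
    replace (S (p-2)) with (p-1)%nat by lia. rewrite rsum_split. replace (1 + (p-1))%nat with p by lia. ring. }
  rewrite E. specialize (hN (p - 2 + S q)%nat (p-2)%nat ltac:(lia) ltac:(lia)). unfold R_dist in hN.
  apply Rabs_def2 in hN. lra.
Qed.
End Summ.

Lemma coef_id (w : nat -> Cx) T g eps j : 0 < T -> 0 < g ->
  2*PI*T * rhs_coef w T g eps j =
  (1-eps) * main (fun n => Im (w n)) (PI/T) T j
  - 2*(PI/T)*(4*(1+eps)/(g*g)) * uu (fun n => Im (w n)) T j.
Proof.
  intros hT hg. unfold rhs_coef, main, uu.
  replace (- 2 * Im (w j) * T) with (-((Im (w j) + Im (w j))*T)) by ring.
  assert (hP := PI_RGT_0).
  field. repeat split; try (intro; nra).
Qed.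

Lemma rc_bound (w : nat -> Cx) T g eps B j : 0 < T -> 0 < g -> 0 < eps < 1 -> Rabs (Im (w j)) <= B ->
  Rabs (rhs_coef w T g eps j) <= (1/PI^2 + 8/(T^2*g^2)) * (1 + exp (2*B*T)).
Proof.
  intros hT hg he hB. unfold rhs_coef.
  assert (hP := PI_RGT_0). assert (hP2 : 0 < PI^2) by (apply pow_lt; lra).
  set (bb := Im (w j)) in *.
  assert (h1 : 0 <= T^2*bb^2) by (apply Rmult_le_pos; apply pow2_ge_0).
  set (al := (1 - eps) / (PI ^ 2 + 4 * T ^ 2 * bb ^ 2)).
  set (be := 4 * (1 + eps) / (T ^ 2 * g ^ 2)).
  set (ex := 1 + exp (- 2 * bb * T)).
  assert (hal0 : 0 <= al) by (unfold al; apply Rmult_le_pos; [lra|left; apply Rinv_0_lt_compat; lra]).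
  assert (hal1 : al <= 1/PI^2).
  { unfold al. unfold Rdiv. apply Rmult_le_compat; try lra. left; apply Rinv_0_lt_compat; lra.
    apply Rinv_le_contravar; lra. }
  assert (hTg : 0 < T^2*g^2) by (apply Rmult_lt_0_compat; apply pow_lt; lra).
  assert (hbe0 : 0 <= be) by (unfold be; apply Rmult_le_pos; [lra|left; apply Rinv_0_lt_compat; lra]).
  assert (hbe1 : be <= 8/(T^2*g^2)) by (unfold be; unfold Rdiv; apply Rmult_le_compat_r; [left; apply Rinv_0_lt_compat; lra|lra]).
  assert (hex0 : 0 < ex) by (unfold ex; assert (0 < exp (- 2 * bb * T)) by apply exp_pos; lra).
  assert (hex1 : ex <= 1 + exp (2*B*T)).
  { unfold ex. apply Rplus_le_compat_l. apply Rabs_le_between in hB.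
    destruct (Rle_lt_or_eq_dec (- 2 * bb * T) (2*B*T)) as [h|h]; [nra| left; apply exp_increasing; auto | rewrite h; lra]. }
  rewrite Rabs_mult, (Rabs_right ex) by lra.
  apply Rmult_le_compat; try lra. apply Rabs_pos.
  unfold Rabs; destruct (Rcase_abs (al - be)); lra.
Qed.

Lemma Cmod2_mul z u : Cmod2 (Cmul z u) = Cmod2 z * Cmod2 u.
Proof. unfold Cmod2, Cmul; simpl. ring. Qed.

Lemma Cmod2_c_le (cz wz : Cx) M A : 0 < A -> A <= Re wz -> Cmod cz <= M / Cmod wz ->
  Cmod2 cz <= M*M/(A*A).
Proof.
  intros hA hw hc.
  assert (hw2 : A*A <= Cmod2 wz) by (unfold Cmod2; nra).
  assert (hcw : Cmod wz * Cmod wz = Cmod2 wz) by (unfold Cmod; apply sqrt_sqrt; nra).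
  assert (hcc : Cmod cz * Cmod cz = Cmod2 cz) by (unfold Cmod; apply sqrt_sqrt; unfold Cmod2; nra).
  assert (hcz0 : 0 <= Cmod cz) by apply sqrt_pos.
  assert (hwz0 : 0 < Cmod wz) by (unfold Cmod; apply sqrt_lt_R0; nra).
  assert (Cmod2 cz <= M*M/Cmod2 wz).
  { rewrite <- hcc, <- hcw. replace (M*M/(Cmod wz*Cmod wz)) with ((M/Cmod wz)*(M/Cmod wz)) by (field; lra).
    apply Rmult_le_compat; auto. }
  eapply Rle_trans; [exact H|]. unfold Rdiv. apply Rmult_le_compat_l. nra.
  apply Rinv_le_contravar; nra.
Qed.

Lemma gam_ineq g eps : 0 < g -> 0 < eps < 1 -> 4/((g*(1-eps/4))*(g*(1-eps/4))) <= 4*(1+eps)/(g*g).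
Proof.
  intros hg he. set (L := 4/((g*(1-eps/4))*(g*(1-eps/4)))).
  assert (hL : 0 < L) by (unfold L; apply Rdiv_lt_0_compat; nra).
  replace (4*(1+eps)/(g*g)) with (L * ((1-eps/4)*(1-eps/4)*(1+eps))) by (unfold L; field; nzl).
  rewrite <- (Rmult_1_r L) at 1. apply Rmult_le_compat_l; nra.
Qed.

Lemma eta_ineq gam A de : 0 < gam -> 0 < de -> 2*gam <= A -> (8/3)/(gam*de) <= A -> 4/3/(gam*(A-gam)) <= de.
Proof.
  intros hg hd hA hA3.
  assert (H1 : (4/3)/de <= gam*A/2).
  { replace ((4/3)/de) with ((8/3)/(gam*de) * (gam/2)) by (field; nzl).
    replace (gam*A/2) with (A*(gam/2)) by field. apply Rmult_le_compat_r; lra. }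
  assert (H2 : gam*A/2 <= gam*(A-gam)) by nra.
  assert (hq : 0 < (4/3)/de) by (apply Rdiv_lt_0_compat; lra).
  apply Rle_trans with ((4/3) * / ((4/3)/de)).
  { unfold Rdiv at 1. apply Rmult_le_compat_l; [lra|]. apply Rinv_le_contravar; lra. }
  right. field. lra.
Qed.

Lemma sq_le x B : -B <= x <= B -> x*x <= B*B.
Proof. intros. nra. Qed.

Theorem lemma5p6 (w c : nat -> Cx) (M g : R)
  (hw0 : forall n, (1 <= n)%nat -> w n <> C0)
  (hgap : is_liminf (fun n => Re (w (S n)) - Re (w n)) g)
  (hg : 0 < g)
  (hIm : exists B, forall n, (1 <= n)%nat -> Rabs (Im (w n)) <= B)
  (hM : 0 < M)
  (hc : forall n, (1 <= n)%nat -> Cmod (c n) <= M / Cmod (w n)) :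
  forall eps, 0 < eps < 1 ->
  exists n0 : nat, (1 <= n0)%nat /\
  forall T, 2 * PI / (g * sqrt (1 - eps)) < T ->
  forall Cc : nat -> Cx,
    (exists l, infinite_sum (fun n => Cmod2 (Cc (S n))) l) ->
    exists (v : nat -> R) (L s : R),
      (forall m, IsRInt (integrand w c Cc T n0 m) 0 T (v m)) /\
      Un_cv v L /\
      infinite_sum (fun j => rhs_coef w T g eps (n0 + j)%nat * Cmod2 (Cc (n0 + j)%nat)) s /\
      2 * PI * T * s <= L.
Proof.
  intros eps heps. destruct heps as [he0 he1].
  destruct hIm as [B0 hB0].
  assert (hB0pos : 0 <= B0) by (specialize (hB0 1%nat (le_n _)); assert (H := Rabs_pos (Im (w 1%nat))); lra).
  set (gam := g*(1-eps/4)).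
  assert (hgam : 0 < gam) by (unfold gam; nra).
  destruct (hgap (g*eps/4) ltac:(nra)) as [[N hN] _].
  set (K0 := g*g + 4*B0*B0).
  assert (hK0 : 0 < K0) by (unfold K0; nra).
  assert (h8 : 0 < 8/(g*g)) by (apply Rdiv_lt_0_compat; nra).
  set (de := Rmin 1 (eps/(4*K0))).
  assert (hde : 0 < de) by (unfold de; apply Rmin_glb_lt; [lra|apply Rdiv_lt_0_compat; lra]).
  set (dmu := Rmin (eps/4) (eps/(16*K0*(8/(g*g)+1)))).
  assert (hdmu : 0 < dmu) by (unfold dmu; apply Rmin_glb_lt; apply Rdiv_lt_0_compat; nra).
  set (A := Rmax (Rmax (2*gam) 1) (Rmax ((8/3)/(gam*de)) (M*M/dmu))).
  assert (hA1 : 2*gam <= A) by (unfold A; eapply Rle_trans; [apply Rmax_l|apply Rmax_l]).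
  assert (hA2 : 1 <= A) by (unfold A; eapply Rle_trans; [apply Rmax_r|apply Rmax_l]).
  assert (hA3 : (8/3)/(gam*de) <= A) by (unfold A; eapply Rle_trans; [apply Rmax_l|apply Rmax_r]).
  assert (hA4 : M*M/dmu <= A) by (unfold A; eapply Rle_trans; [apply Rmax_r|apply Rmax_r]).
  set (a := fun n => Re (w n)).
  set (N1 := max N 1).
  assert (hstep1 : forall n, (N1 <= n)%nat -> gam <= a (S n) - a n).
  { intros n hn. unfold a. specialize (hN n ltac:(lia)). unfold gam. simpl in hN. lra. }
  destruct (nat_unbounded ((A - a N1)/gam)) as [K hK].
  exists (N1 + K)%nat. split; [lia|].
  set (n0 := (N1 + K)%nat).
  assert (hstep : forall n, (n0 <= n)%nat -> gam <= a (S n) - a n) by (intros; apply hstep1; lia).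
  assert (ha0 : A <= a n0).
  { assert (H := a_dist a gam N1 hstep1 N1 K (le_n _)). fold n0 in H.
    assert (gam * ((A - a N1)/gam) = A - a N1) by (field; lra).
    assert (gam * ((A - a N1)/gam) <= gam * INR K) by (apply Rmult_le_compat_l; lra). lra. }
  intros T hT Cc hCc.
  set (sq := sqrt (1 - eps)) in *.
  assert (hsq2 : sq * sq = 1 - eps) by (unfold sq; apply sqrt_sqrt; lra).
  assert (hsq0 : 0 < sq) by (unfold sq; apply sqrt_lt_R0; lra).
  assert (hsq1 : sq <= 1 - eps/4) by nra.
  assert (hP := PI_RGT_0).
  assert (hT0 : 0 < T).
  { apply Rlt_trans with (2*PI/(g*sq)); auto. apply Rdiv_lt_0_compat; [lra|apply Rmult_lt_0_compat; lra]. }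
  assert (hT2 : 2*PI < T*(g*sq)).
  { assert (hgs : 0 < g*sq) by (apply Rmult_lt_0_compat; lra).
    apply (Rmult_lt_compat_r (g*sq)) in hT; [|lra].
    replace (2 * PI / (g * sq) * (g * sq)) with (2*PI) in hT by (field; split; [apply Rgt_not_eq; exact hsq0|apply Rgt_not_eq; exact hg]). idtac. lra. }
  set (nu := PI/T).
  assert (hnu : nu*T = PI) by (unfold nu; field; lra).
  assert (hnu0 : 0 < nu) by (unfold nu; apply Rdiv_lt_0_compat; lra).
  assert (hnug : 2*nu <= gam).
  { unfold gam. assert (2*nu*T < g*sq*T) by (rewrite Rmult_assoc, hnu; nra).
    assert (2*nu < g*sq) by nra. nra. }
  set (b := fun n => Im (w n)).
  assert (hB : forall n, (n0 <= n)%nat -> Rabs (b n) <= B0) by (intros; unfold b; apply hB0; lia).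
  set (xC := fun n => Re (Cc n)). set (yC := fun n => Im (Cc n)).
  set (xG := fun n => Re (Cmul (c n) (Cc n))). set (yG := fun n => Im (Cmul (c n) (Cc n))).
  set (Z := X2 xC yC).
  assert (hZC : forall j, Cmod2 (Cc j) = Z j) by (intros; reflexivity).
  assert (hz : forall j, 0 <= Z j) by (intros; apply X2_nonneg).
  set (mu := M*M/(A*A)).
  assert (hAp : 0 < A) by lra.
  assert (hmu0 : 0 <= mu) by (unfold mu; apply Rlt_le, Rdiv_lt_0_compat; nra).
  assert (hZG : forall j, (n0 <= j)%nat -> X2 xG yG j <= mu * Z j).
  { intros j hj. change (X2 xG yG j) with (Cmod2 (Cmul (c j) (Cc j))). rewrite Cmod2_mul.
    rewrite hZC. apply Rmult_le_compat_r; auto.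
    apply (Cmod2_c_le (c j) (w j) M A hAp); [|apply hc; lia].
    assert (H := a_dist a gam n0 hstep n0 (j - n0) (le_n _)). replace (n0 + (j - n0))%nat with j in H by lia.
    assert (0 <= gam * INR (j - n0)) by (apply Rmult_le_pos; [lra|apply pos_INR]). unfold a in *. lra. }
  destruct hCc as [l hl].
  assert (hl' : infinite_sum (fun n => Z (S n)) l) by exact hl.
  assert (hLF : forall q, rsum (X2 xC yC) n0 q <= l) by (intros; apply (summ_bound Z l hz hl'); lia).
  assert (hTF : forall e, 0 < e -> exists N, forall p q, (N <= p)%nat -> rsum (X2 xC yC) p q <= e)
    by (intros; apply (summ_tail Z l hz hl'); auto).
  assert (hZGs : forall p q, (n0 <= p)%nat -> rsum (X2 xG yG) p q <= mu * rsum Z p q).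
  { intros p q hp. rewrite <- rsum_scal. apply rsum_le. intros; apply hZG; lia. }
  assert (hLG : forall q, rsum (X2 xG yG) n0 q <= mu * l).
  { intros q. eapply Rle_trans; [apply hZGs; lia|]. apply Rmult_le_compat_l; auto. }
  assert (hTG : forall e, 0 < e -> exists N, forall p q, (N <= p)%nat -> rsum (X2 xG yG) p q <= e).
  { intros e he. destruct (hTF (e/(mu+1))) as [N2 hN2]. apply Rdiv_lt_0_compat; lra.
    exists (max N2 n0). intros p q hp. eapply Rle_trans; [apply hZGs; lia|].
    specialize (hN2 p q ltac:(lia)). apply Rle_trans with (mu * (e/(mu+1))). apply Rmult_le_compat_l; auto.
    replace (mu * (e/(mu+1))) with (e * (mu/(mu+1))) by (field; lra).
    assert (mu/(mu+1) <= 1). { apply (Rmult_le_reg_r (mu+1)); [lra|]. unfold Rdiv. rewrite Rmult_assoc, Rinv_l by lra. lra. }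
    assert (0 <= mu/(mu+1)) by (apply Rmult_le_pos; [lra| left; apply Rinv_0_lt_compat; lra]). rewrite <- (Rmult_1_r e) at 2. apply Rmult_le_compat_l; lra. }
  assert (CF := Vq_cauchy a b nu T gam A B0 n0 hT0 hnu hnu0 hgam hnug hA1 hstep ha0 hB xC yC l hLF hTF).
  assert (CG := Vq_cauchy a b nu T gam A B0 n0 hT0 hnu hnu0 hgam hnug hA1 hstep ha0 hB xG yG (mu*l) hLG hTG).
  destruct (R_complete _ CF) as [LF hLFc]. destruct (R_complete _ CG) as [LG hLGc].
  set (K2 := (1/PI^2 + 8/(T^2*g^2)) * (1 + exp (2*B0*T))).
  assert (hrc : forall j, (n0 <= j)%nat -> Rabs (rhs_coef w T g eps j) <= K2).
  { intros j hj. apply rc_bound; auto. apply hB0. lia. }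
  assert (hK2 : 0 <= K2) by (eapply Rle_trans; [apply Rabs_pos|apply (hrc n0 (le_n _))]).
  set (ser := fun j => rhs_coef w T g eps (n0 + j)%nat * Cmod2 (Cc (n0 + j)%nat)).
  assert (Cs : Cauchy_crit (sum_f_R0 ser)).
  { intros e he. destruct (hTF (e/(K2+1))) as [N3 hN3]. apply Rdiv_lt_0_compat; lra.
    exists N3. intros n m hn hm. unfold R_dist.
    assert (key : forall n r, (N3 <= n)%nat -> Rabs (sum_f_R0 ser (n + r) - sum_f_R0 ser n) < e).
    { intros n' r hn'. unfold ser. rewrite !(sum_f_rsum' (fun j => rhs_coef w T g eps j * Cmod2 (Cc j))).
      replace (S (n' + r)) with (S n' + r)%nat by lia. rewrite rsum_split.
      replace (rsum (fun j => rhs_coef w T g eps j * Cmod2 (Cc j)) n0 (S n') +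
        rsum (fun j => rhs_coef w T g eps j * Cmod2 (Cc j)) (n0 + S n') r -
        rsum (fun j => rhs_coef w T g eps j * Cmod2 (Cc j)) n0 (S n'))
        with (rsum (fun j => rhs_coef w T g eps j * Cmod2 (Cc j)) (n0 + S n') r) by ring.
      eapply Rle_lt_trans; [apply rsum_abs|].
      apply Rle_lt_trans with (rsum (fun j => K2 * Z j) (n0 + S n') r).
      { apply rsum_le. intros i hi. rewrite Rabs_mult, (Rabs_right (Cmod2 _)) by (rewrite hZC; apply Rle_ge; auto).
        rewrite hZC. apply Rmult_le_compat_r; auto. apply hrc. lia. }
      rewrite rsum_scal. specialize (hN3 (n0 + S n')%nat r ltac:(lia)).
      apply Rle_lt_trans with (K2 * (e/(K2+1))). apply Rmult_le_compat_l; auto.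
      replace (K2 * (e/(K2+1))) with (e * (K2/(K2+1))) by (field; lra).
      assert (K2/(K2+1) < 1). { apply (Rmult_lt_reg_r (K2+1)); [lra|]. unfold Rdiv. rewrite Rmult_assoc, Rinv_l by lra. lra. }
      nra. }
    destruct (le_lt_dec n m) as [h|h].
    - replace m with (n + (m - n))%nat by lia. rewrite Rabs_minus_sym. apply key; auto.
    - replace n with (m + (n - m))%nat by lia. apply key; auto. }
  destruct (R_complete _ Cs) as [s hs].
  exists (fun m => Vq a b xC yC nu T n0 m - 2 * Vq a b xG yG nu T n0 m), (LF - 2*LG), s.
  split; [|split; [|split]].
  - intros m. apply IsRInt_of. apply integrand_isRInt with (n1 := n0); auto.
    + intros j l0 hj hl0 hjl. apply (hsepF a nu gam n0 hnu0 hgam hnug hstep j l0 hj hl0 hjl).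
    + intros j l0 hj hl0. apply (hsumF a nu gam A n0 hnu0 hgam hnug hA1 hstep ha0 j l0 hj hl0).
  - apply Un_cv_lin; auto.
  - exact hs.
  -
    set (coef := fun j => (1-eps) * main b nu T j - 2*nu*(4*(1+eps)/(g*g)) * uu b T j).
    assert (hcoef : forall j, (n0 <= j)%nat -> coef j <= main b nu T j - 2*nu*Wb gam A*uu b T j
                        - 2*mu*(main b nu T j + 2*nu*Wb gam A*uu b T j)).
    { intros j hj. unfold coef.
      assert (hu := uu_pos b T j).
      assert (hbj := hB j hj). apply Rabs_le_between in hbj.
      apply (term_alg (main b nu T j) (uu b T j) nu (Wb gam A) eps g K0 de mu); auto.
      - left. apply Wb_pos; auto.
      - unfold main. unfold Rdiv. apply Rmult_le_compat_l. apply Rmult_le_pos; lra.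
        apply Rinv_le_contravar. apply Rplus_lt_le_0_compat; [apply Rmult_lt_0_compat; lra|apply Rle_0_sqr]. unfold K0.
        assert (gam <= g) by (unfold gam; assert (0 <= g*(eps/4)) by (apply Rmult_le_pos; lra); lra).
        assert (nu*nu <= g*g) by (apply sq_le; lra).
        assert ((b j + b j)*(b j + b j) <= (2*B0)*(2*B0)) by (apply sq_le; lra). lra.
      - unfold Wb. assert (E1 : 4/(gam*gam) <= 4*(1+eps)/(g*g)).
        { unfold gam. apply gam_ineq; lra. }
        assert (E2 : 4/3/(gam*(A-gam)) <= de) by (apply eta_ineq; auto).
        lra.
      - apply (Rmult_le_reg_r (g*g)); [nra|]. unfold Rdiv. rewrite !Rmult_assoc, Rinv_l by nra. lra.
      - unfold de. apply Rmin_r.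
      - unfold de. apply Rmin_l.
      - apply Rle_trans with dmu; [|unfold dmu; apply Rmin_l].
        unfold mu. apply Rle_trans with (M*M/A).
        { unfold Rdiv. apply Rmult_le_compat_l; [nra|]. apply Rinv_le_contravar; nra. }
        apply (Rmult_le_reg_r A); [lra|]. unfold Rdiv. rewrite Rmult_assoc, Rinv_l by lra.
        apply (Rmult_le_reg_r (/dmu)); [apply Rinv_0_lt_compat; lra|]. rewrite Rmult_1_r.
        replace (dmu * A * / dmu) with A by (field; lra). exact hA4.
      - apply Rle_trans with dmu; [|unfold dmu; apply Rmin_r].
        unfold mu. apply Rle_trans with (M*M/A).
        { unfold Rdiv. apply Rmult_le_compat_l; [nra|]. apply Rinv_le_contravar; nra. }
        apply (Rmult_le_reg_r A); [lra|]. unfold Rdiv. rewrite Rmult_assoc, Rinv_l by lra.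
        apply (Rmult_le_reg_r (/dmu)); [apply Rinv_0_lt_compat; lra|]. rewrite Rmult_1_r.
        replace (dmu * A * / dmu) with A by (field; lra). exact hA4. }
    assert (hlow : forall m, rsum (fun j => coef j * X2 xC yC j) n0 m <=
                     Vq a b xC yC nu T n0 m - 2 * Vq a b xG yG nu T n0 m).
    { intros m. apply (lower_m a b nu T gam A n0 hnu0 hgam hnug hA1 hstep ha0 xC yC xG yG mu coef m hmu0 hZG hcoef). }
    apply Rle_cv_lim with (Un := fun n => 2*PI*T * sum_f_R0 ser n)
      (Vn := fun n => Vq a b xC yC nu T n0 (S n) - 2 * Vq a b xG yG nu T n0 (S n)).
    + intros n. eapply Rle_trans; [|apply hlow]. unfold ser.
      rewrite (sum_f_rsum' (fun j => rhs_coef w T g eps j * Cmod2 (Cc j))). rewrite <- rsum_scal.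
      right. apply rsum_ext. intros i hi. rewrite hZC. unfold coef, b, nu. rewrite <- coef_id by auto.
      fold nu. fold b. unfold Z. ring.
    + apply Un_cv_scal. exact hs.
    + apply (Un_cv_shift (fun m => Vq a b xC yC nu T n0 m - 2 * Vq a b xG yG nu T n0 m)). apply Un_cv_lin; auto.
Qed.
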